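(* Let $b>1$ be an integer and let $H$ be a generalized $b$-happy function with digit mean $\mu$ and digit standard deviation $\sigma$. There exists $N$ such that for every $n>N$ and every $n$-strict interval $I$ there exists $m\in\mathbb{N}$ with $$\left[\mu m-\sigma m^{5/8},\ \mu m+\sigma m^{5/8}\right]\subseteq I.$$
   Context: A generalized $b$-happy function: fix an integer $b>1$ and non-negative integers $h(0),\dots,h(b-1)$ with $h(0)=0$, $h(1)=1$; for $n=\sum_{i=0}^k a_ib^i$ in base $b$, $H(n)=\sum_{i=0}^k h(a_i)$. Digit mean $\mu=\frac1b\sum_{j=0}^{b-1}h(j)$, digit variance $\sigma^2=\frac1b\sum_{j=0}^{b-1}(h(j)-\mu)^2$. An integer interval $[a,c]$ ($a,c$ real) is the set of integers $x$ with $a\le x\le c$; $|I|$ is its cardinality. For a positive integer $n$, an integer interval $I$ is $n$-strict if $I\subseteq[b^{n-1},b^n-1]$ and $|I|=b^{3n/4}$. *)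

(* Defs.v *)
From Stdlib Require Import Reals List ZArith Lia Lra.
Open Scope R_scope.

Fixpoint digit_sum (h : nat -> nat) (b : nat) : R :=
  match b with
  | O => 0
  | S k => digit_sum h k + INR (h k)
  end.

Definition digit_mean (h : nat -> nat) (b : nat) : R := digit_sum h b / INR b.

Fixpoint digit_sqdev_sum (h : nat -> nat) (b : nat) (mu : R) : R :=
  match b with
  | O => 0
  | S k => digit_sqdev_sum h k mu + (INR (h k) - mu) ^ 2
  end.

Definition digit_var (h : nat -> nat) (b : nat) : R :=
  digit_sqdev_sum h b (digit_mean h b) / INR b.

Definition digit_sd (h : nat -> nat) (b : nat) : R := sqrt (digit_var h b).

(* Base-b digit list (least significant first) and the generalized happy
   function H(n) = sum_i h(a_i).  (Not needed for the statement itself,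
   recorded for context.) *)
Fixpoint digits_aux (b fuel n : nat) : list nat :=
  match fuel with
  | O => nil
  | S f => if Nat.eqb n 0 then nil else (n mod b) :: digits_aux b f (n / b)
  end.
Definition happyH (h : nat -> nat) (b n : nat) : nat :=
  fold_right (fun d acc => h d + acc)%nat 0%nat (digits_aux b n n).

Definition int_interval (a c : R) (x : Z) : Prop := a <= IZR x <= c.

Definition has_card (S : Z -> Prop) (k : nat) : Prop :=
  exists l : list Z, NoDup l /\ (forall x, In x l <-> S x) /\ length l = k.

Definition n_strict (b n : nat) (a c : R) : Prop :=
  (forall x, int_interval a c x ->
     int_interval (INR b ^ (n - 1)) (INR b ^ n - 1) x) /\
  exists k : nat, has_card (int_interval a c) k /\
                  INR k = Rpower (INR b) (3 * INR n / 4).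

(* Main.v *)
Require Import Defs.
From Stdlib Require Import Reals List ZArith.
From Stdlib Require Import Lia Lra.
Open Scope R_scope.

Lemma list_min (l : list Z) : l <> nil ->
  exists z, In z l /\ forall x, In x l -> (z <= x)%Z.
Proof.
  induction l as [|a l IH]; [congruence|intros _].
  destruct l as [|b l'].
  - exists a; split; [left; auto|]. intros x [->|[]]; lia.
  - destruct IH as [z [Hz Hall]]; [discriminate|].
    exists (Z.min a z). split.
    + destruct (Z.min_spec a z) as [[_ ->]|[_ ->]]; [left|right]; auto.
    + intros x [->|Hx]; [lia|]. specialize (Hall x Hx); lia.
Qed.

Lemma list_max (l : list Z) : l <> nil ->
  exists z, In z l /\ forall x, In x l -> (x <= z)%Z.
Proof.
  induction l as [|a l IH]; [congruence|intros _].
  destruct l as [|b l'].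
  - exists a; split; [left; auto|]. intros x [->|[]]; lia.
  - destruct IH as [z [Hz Hall]]; [discriminate|].
    exists (Z.max a z). split.
    + destruct (Z.max_spec a z) as [[_ ->]|[_ ->]]; [right|left]; auto.
    + intros x [->|Hx]; [lia|]. specialize (Hall x Hx); lia.
Qed.

Lemma count_bound (l : list Z) lo hi : NoDup l ->
  (forall x, In x l -> (lo <= x <= hi)%Z) -> (lo <= hi)%Z ->
  (Z.of_nat (length l) <= hi - lo + 1)%Z.
Proof.
  intros Hnd Hall Hle.
  assert (Hi : incl l (map (fun i => (lo + Z.of_nat i)%Z) (seq 0 (Z.to_nat (hi - lo + 1))))).
  { intros x Hx. apply in_map_iff. exists (Z.to_nat (x - lo)).
    specialize (Hall x Hx). split; [lia|]. apply in_seq. lia. }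
  pose proof (NoDup_incl_length Hnd Hi) as H.
  rewrite length_map, length_seq in H. lia.
Qed.

Lemma digit_sum_nonneg h k : 0 <= digit_sum h k.
Proof. induction k; simpl; [lra|]. pose proof (pos_INR (h k)); lra. Qed.

Lemma digit_sum_ge h k : (1 < k)%nat -> INR (h 1%nat) <= digit_sum h k.
Proof.
  induction k as [|k IH]; intros Hk; [lia|]. simpl.
  destruct (Nat.eq_dec k 1) as [->|Hne].
  - simpl. pose proof (digit_sum_nonneg h 1). simpl in *. lra.
  - pose proof (pos_INR (h k)). assert (INR (h 1%nat) <= digit_sum h k) by (apply IH; lia). lra.
Qed.

Theorem lemma4p2 (b : nat) (h : nat -> nat) :
  (1 < b)%nat -> h 0%nat = 0%nat -> h 1%nat = 1%nat ->
  exists N : nat, forall n : nat, (N < n)%nat ->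
    forall a c : R, n_strict b n a c ->
      exists m : nat,
        forall x : Z,
          int_interval (digit_mean h b * INR m - digit_sd h b * Rpower (INR m) (5 / 8))
                       (digit_mean h b * INR m + digit_sd h b * Rpower (INR m) (5 / 8)) x ->
          int_interval a c x.
Proof.
  intros Hb H0 H1.
  set (mu := digit_mean h b). set (sg := digit_sd h b). set (B := INR b).
  assert (HB : 2 <= B) by (unfold B; apply (le_INR 2); lia).
  assert (Hmu : 0 < mu).
  { unfold mu, digit_mean. pose proof (digit_sum_ge h b Hb) as Hs. rewrite H1 in Hs. simpl in Hs.
    apply Rdiv_lt_0_compat; [lra|]. fold B; lra. }
  assert (Hsg : 0 <= sg) by apply sqrt_pos.
  set (D := Rpower (/ mu) (5/8)).
  assert (HD : 0 < D) by (unfold D, Rpower; apply exp_pos).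
  set (C := 2 * sg * D + 2 * sg + 2 * mu + 3).
  assert (HlnB : 0 < ln B) by (rewrite <- ln_1; apply ln_increasing; lra).
  exists (Z.to_nat (up (8 * C / ln B))).
  intros n Hn a c [Hsub [k [[l [Hnd [Hin Hlen]]] Hk]]].
  pose proof (archimed (8 * C / ln B)) as [Hup _].
  assert (HnC : 8 * C / ln B < INR n).
  { apply Rlt_le_trans with (IZR (up (8 * C / ln B))); [lra|].
    destruct (Z_lt_le_dec (up (8 * C / ln B)) 0) as [Hneg|Hpos].
    - apply Rle_trans with 0; [apply IZR_le; lia|apply pos_INR].
    - rewrite <- (Z2Nat.id _ Hpos), <- INR_IZR_INZ. apply le_INR; lia. }
  set (T := Rpower B (INR n)).
  assert (HT : T = B ^ n) by (unfold T; apply Rpower_pow; lra).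
  set (s := Rpower T (/ 8)).
  assert (Hs_exp : s = exp (INR n * / 8 * ln B)).
  { unfold s, T. rewrite Rpower_mult. unfold Rpower. f_equal. }
  assert (HsC : C <= s).
  { rewrite Hs_exp. eapply Rle_trans; [|apply exp_ineq1_le].
    apply Rmult_lt_compat_r with (r := ln B) in HnC; [|lra].
    unfold Rdiv in HnC. rewrite Rmult_assoc, Rinv_l in HnC by lra. lra. }
  assert (Hs0 : 0 < s) by (unfold s, Rpower; apply exp_pos).
  assert (HT0 : 0 < T) by (unfold T, Rpower; apply exp_pos).
  assert (Hpow : forall j : nat, s ^ j = Rpower T (/ 8 * INR j)).
  { intro j. rewrite <- Rpower_pow by lra. unfold s. apply Rpower_mult. }
  assert (Hk6 : INR k = s ^ 6).
  { rewrite Hk, Hpow. unfold T. rewrite Rpower_mult. f_equal. simpl. lra. }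
  assert (Hs5 : Rpower T (5/8) = s ^ 5) by (rewrite Hpow; f_equal; simpl; lra).
  assert (HlNE : l <> nil).
  { intros ->. simpl in Hlen. subst k. simpl in Hk6.
    assert (0 < s ^ 6) by (apply pow_lt; lra). lra. }
  destruct (list_min l HlNE) as [u [Hu Humin]].
  destruct (list_max l HlNE) as [v [Hv Hvmax]].
  assert (Hcnt := count_bound l u v Hnd (fun x Hx => conj (Humin x Hx) (Hvmax x Hx)) (Humin v Hv)).
  rewrite Hlen in Hcnt.
  assert (Hvu : INR k - 1 <= IZR v - IZR u).
  { rewrite INR_IZR_INZ, <- minus_IZR. replace 1 with (IZR 1) by reflexivity.
    rewrite <- minus_IZR. apply IZR_le. lia. }
  destruct (proj1 (Hin u) Hu) as [Hau _].
  destruct (proj1 (Hin v) Hv) as [_ Hvc].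
  destruct (Hsub u (proj1 (Hin u) Hu)) as [Hu1 _].
  destruct (Hsub v (proj1 (Hin v) Hv)) as [_ Hv1].
  fold B in Hu1, Hv1.
  assert (HBpos : 0 < B ^ (n - 1)) by (apply pow_lt; lra).
  set (c0 := (IZR u + IZR v) / 2).
  assert (Huv : IZR u <= IZR v) by (apply IZR_le; apply Humin; auto).
  assert (Hc0 : 0 < c0) by (unfold c0; lra).
  assert (Hc0T : c0 <= T - 1) by (unfold c0; rewrite HT; lra).
  set (z := Int_part (c0 / mu)).
  destruct (base_Int_part (c0 / mu)) as [Hz1 Hz2]. fold z in Hz1, Hz2.
  assert (Hz0 : (0 <= z)%Z).
  { assert (0 < c0 / mu) by (apply Rdiv_lt_0_compat; lra).
    assert (Hq : -1 < IZR z) by lra. replace (-1) with (IZR (-1)) in Hq by reflexivity. apply lt_IZR in Hq. lia. }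
  exists (Z.to_nat z).
  assert (Hm : INR (Z.to_nat z) = IZR z) by (rewrite INR_IZR_INZ, Z2Nat.id; auto).
  rewrite Hm.
  assert (Hmu1 : mu * IZR z <= c0).
  { apply Rmult_le_compat_l with (r := mu) in Hz1; [|lra].
    unfold Rdiv in Hz1. rewrite <- Rmult_assoc, (Rmult_comm mu c0), Rmult_assoc, Rinv_r in Hz1 by lra. lra. }
  assert (Hmu2 : c0 - mu < mu * IZR z).
  { assert (IZR z > c0 / mu - 1) by lra.
    apply Rmult_gt_compat_l with (r := mu) in H; [|lra].
    unfold Rdiv in H. rewrite Rmult_minus_distr_l, <- Rmult_assoc, (Rmult_comm mu c0), Rmult_assoc, Rinv_r in H by lra. lra. }
  set (X := Rpower (IZR z) (5/8)).
  assert (HX : X <= 1 + s ^ 5 * D).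
  { assert (0 < s ^ 5 * D) by (apply Rmult_lt_0_compat; [apply pow_lt|]; lra).
    destruct (Z.eq_dec z 0) as [Hz|Hnz].
    - unfold X. rewrite Hz. unfold Rpower, ln. destruct (Rlt_dec _ _) as [Hlt|Hlt]; [exfalso; lra|].
      rewrite Rmult_0_r, exp_0. lra.
    - assert (Hzp : 0 < IZR z) by (apply IZR_lt; lia).
      assert (IZR z <= T * / mu).
      { apply Rmult_le_reg_l with mu; [lra|].
        rewrite <- Rmult_assoc, (Rmult_comm mu T), Rmult_assoc, Rinv_r by lra. lra. }
      unfold X. eapply Rle_trans.
      + apply Rle_Rpower_l; [lra|split; eauto].
      + rewrite <- Rpower_mult_distr by (try apply Rinv_0_lt_compat; lra).
        rewrite Hs5. fold D. lra. }
  assert (Hkey : sg * X + mu <= (s ^ 6 - 1) / 2).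
  { assert (sg * X <= sg * (1 + s ^ 5 * D)) by (apply Rmult_le_compat_l; auto).
    assert (H5 : 1 <= s ^ 5).
    { replace 1 with (1 ^ 5) by ring. apply pow_incr. unfold C in HsC. split; [lra|].
      assert (0 <= sg * D) by (apply Rmult_le_pos; lra). lra. }
    replace (s ^ 6) with (s * s ^ 5) by ring.
    assert (C * s ^ 5 <= s * s ^ 5) by (apply Rmult_le_compat_r; lra).
    unfold C in *.
    assert (0 <= sg * D * s ^ 5) by (apply Rmult_le_pos; [apply Rmult_le_pos|]; lra).
    nra. }
  intros x [Hx1 Hx2]. fold mu sg X in Hx1, Hx2.
  unfold int_interval. split.
  - apply Rle_trans with (IZR u); [lra|]. unfold c0 in *. lra.
  - apply Rle_trans with (IZR v); [|lra]. unfold c0 in *. lra.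
Qed.
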